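(* Let $K_c=\operatorname{conv}\big(\mathbb{S}^{d-1}\cup\{\boldsymbol v_i\mid i\in I\}\big)\subset\mathbb{E}^d$ be a cap body and let $i\in I$. A direction $\boldsymbol u\in\mathbb{S}^{d-1}$ illuminates the vertex $\boldsymbol v_i$ of $K_c$ if and only if $\langle\boldsymbol v_i,\boldsymbol u\rangle<-\sqrt{\|\boldsymbol v_i\|^2-1}$.
   Context: $\mathbb{S}^{d-1}$ is the unit sphere centred at the origin and $B^d$ the closed unit ball. A cap body is $\operatorname{conv}(\mathbb{S}^{d-1}\cup\{\boldsymbol v_i\mid i\in I\})$ where $\{\boldsymbol v_i\}$ is a countable subset of $\mathbb{E}^d\setminus B^d$ such that for distinct $i,j$ the segment $\overline{\boldsymbol v_i\boldsymbol v_j}$ intersects $B^d$; the points $\boldsymbol v_i$ are its vertices. A direction $\boldsymbol u\in\mathbb{S}^{d-1}$ illuminates a boundary point $\boldsymbol p$ of a convex body $K$ if $\boldsymbol p+\lambda\boldsymbol u$ is in the interior of $K$ for some $\lambda>0$. *)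

(* Defs.v *)
From HB Require Import structures.
From mathcomp Require Import all_boot all_order all_algebra.
From mathcomp Require Import reals.
Set Implicit Arguments. Unset Strict Implicit. Unset Printing Implicit Defensive.
Import Order.TTheory GRing.Theory Num.Theory.
Local Open Scope ring_scope.

Section Defs.
Variables (R : realType) (d : nat).
Local Notation vec := 'rV[R]_d.

Definition dotp (x y : vec) : R := \sum_(j < d) x ord0 j * y ord0 j.
Definition enorm (x : vec) : R := Num.sqrt (dotp x x).

Definition sphere (x : vec) : Prop := enorm x = 1.
Definition ball1 (x : vec) : Prop := enorm x <= 1.

Definition conv (A : vec -> Prop) (x : vec) : Prop :=
  exists (n : nat) (w : 'I_n -> R) (p : 'I_n -> vec),
    (forall k, 0 <= w k) /\ \sum_(k < n) w k = 1 /\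
    (forall k, A (p k)) /\ x = \sum_(k < n) w k *: p k.

Definition interior (K : vec -> Prop) (p : vec) : Prop :=
  exists2 e : R, 0 < e & forall y : vec, enorm (y - p) < e -> K y.

Definition illuminates (K : vec -> Prop) (p u : vec) : Prop :=
  exists2 lam : R, 0 < lam & interior K (p + lam *: u).

Definition segment (a b x : vec) : Prop :=
  exists2 t : R, 0 <= t <= 1 & x = (1 - t) *: a + t *: b.

Definition cap_vertices (I : countType) (v : I -> vec) : Prop :=
  (forall i, ~ ball1 (v i)) /\
  (forall i j, i <> j -> exists x, segment (v i) (v j) x /\ ball1 x).

Definition cap_body (I : countType) (v : I -> vec) : vec -> Prop :=
  conv (fun x => sphere x \/ exists i, x = v i).
End Defs.

(* Main.v *)
Require Import Defs.
From mathcomp Require Import all_boot all_order all_algebra.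
From mathcomp Require Import reals.
From mathcomp Require Import ring lra.
Import Order.TTheory GRing.Theory Num.Theory.
Local Open Scope ring_scope.
Set Implicit Arguments. Unset Strict Implicit.

Section Helpers.
Variables (R : realType) (d : nat).
Local Notation vec := 'rV[R]_d.

Lemma dotpC (x y : vec) : dotp x y = dotp y x.
Proof. by apply: eq_bigr => j _; rewrite mulrC. Qed.

Lemma dotpDl (x y z : vec) : dotp (x + y) z = dotp x z + dotp y z.
Proof. rewrite /dotp -big_split /=; apply: eq_bigr => j _; rewrite !mxE; ring. Qed.

Lemma dotpZl a (x z : vec) : dotp (a *: x) z = a * dotp x z.
Proof. rewrite /dotp mulr_sumr; apply: eq_bigr => j _; rewrite !mxE; ring. Qed.

Lemma dotpNl (x z : vec) : dotp (- x) z = - dotp x z.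
Proof. by rewrite -scaleN1r dotpZl mulN1r. Qed.

Lemma dotpBl (x y z : vec) : dotp (x - y) z = dotp x z - dotp y z.
Proof. by rewrite dotpDl dotpNl. Qed.

Lemma dotpDr (x y z : vec) : dotp z (x + y) = dotp z x + dotp z y.
Proof. by rewrite !(dotpC z) dotpDl. Qed.

Lemma dotpZr a (x z : vec) : dotp z (a *: x) = a * dotp z x.
Proof. by rewrite !(dotpC z) dotpZl. Qed.

Lemma dotpBr (x y z : vec) : dotp z (x - y) = dotp z x - dotp z y.
Proof. by rewrite !(dotpC z) dotpBl. Qed.

Lemma dotp_ge0 (x : vec) : 0 <= dotp x x.
Proof. by apply: sumr_ge0 => j _; rewrite -expr2 sqr_ge0. Qed.

Lemma enorm_sq (x : vec) : enorm x ^+ 2 = dotp x x.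
Proof. by rewrite /enorm sqr_sqrtr // dotp_ge0. Qed.

Lemma enorm_ge0 (x : vec) : 0 <= enorm x.
Proof. exact: sqrtr_ge0. Qed.

Lemma dotp_sum n (w : 'I_n -> R) (p : 'I_n -> vec) z :
  dotp (\sum_(k < n) w k *: p k) z = \sum_(k < n) w k * dotp (p k) z.
Proof.
rewrite /dotp.
under eq_bigr => j _ do rewrite summxE mulr_suml.
rewrite exchange_big /=; apply: eq_bigr => k _.
rewrite mulr_sumr; apply: eq_bigr => j _; rewrite !mxE; ring.
Qed.

Lemma dotp0 (y : vec) : dotp y y = 0 -> forall x, dotp x y = 0.
Proof.
move=> /eqP; rewrite psumr_eq0; last by move=> j _; rewrite -expr2 sqr_ge0.
move=> /allP H x; rewrite /dotp big1 // => j _.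
have := H j (mem_index_enum j); rewrite /= mulf_eq0 orbb => /eqP ->.
by rewrite mulr0.
Qed.

Lemma CS (x y : vec) : dotp x y ^+ 2 <= dotp x x * dotp y y.
Proof.
have [y0|ypos] := eqVneq (dotp y y) 0.
  by rewrite (dotp0 y0 x) y0 expr0n mulr0.
have yp : 0 < dotp y y by rewrite lt0r ypos dotp_ge0.
have := dotp_ge0 (dotp y y *: x - dotp x y *: y).
rewrite !(dotpBl, dotpBr, dotpZl, dotpZr) (dotpC y x) => H.
nra.
Qed.

Lemma sphereE (x : vec) : sphere x <-> dotp x x = 1.
Proof.
rewrite /sphere; split => H.
  by rewrite -enorm_sq H expr1n.
by rewrite /enorm H sqrtr1.
Qed.

Lemma ball1E (x : vec) : ball1 x <-> dotp x x <= 1.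
Proof.
rewrite /ball1 -enorm_sq; have := enorm_ge0 x; split => H1.
  nra.
by apply: contraLR H1; rewrite -!ltNge => H2; nra.
Qed.

Lemma enorm_lt (x : vec) e : 0 < e -> (enorm x < e <-> dotp x x < e ^+ 2).
Proof.
move=> e0; rewrite -enorm_sq; have := enorm_ge0 x; split => H1.
  nra.
by apply: contraTT H1; rewrite -!leNgt => H2; nra.
Qed.

Lemma conv_halfspace (A : vec -> Prop) m k x :
  (forall y, A y -> dotp y m <= k) -> conv A x -> dotp x m <= k.
Proof.
move=> HA [n [w [p [w0 [w1 [Ap ->]]]]]].
rewrite dotp_sum -[k]mul1r -w1 mulr_suml.
by apply: ler_sum => j _; apply: ler_wpM2l; [exact: w0 | exact: HA].
Qed.

Lemma ball_conv (u b : vec) : dotp u u = 1 -> dotp b b <= 1 ->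
  exists a1 a2 t, [/\ 0 <= t <= 1, dotp a1 a1 = 1, dotp a2 a2 = 1 &
     b = t *: a1 + (1 - t) *: a2].
Proof.
move=> u1 b1.
have [bb1|bblt] := eqVneq (dotp b b) 1.
  exists b, b, 1; split => //; first by rewrite lexx ler01.
  by rewrite subrr scale0r addr0 scale1r.
have bl : dotp b b < 1 by rewrite lt_neqAle bblt b1.
set be := dotp b u.
set D := be ^+ 2 + 1 - dotp b b.
have D0 : 0 < D by rewrite /D; nra.
set sq := Num.sqrt D.
have sq2 : sq ^+ 2 = D by rewrite sqr_sqrtr // ltW.
have sq0 : 0 < sq by rewrite sqrtr_gt0.
have sqbe : be ^+ 2 < sq ^+ 2 by rewrite sq2 /D; nra.
have sqb1 : - sq < be by nra.
have sqb2 : be < sq by nra.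
exists (b + (- be + sq) *: u), (b + (- be - sq) *: u), ((be + sq) / (2 * sq)).
split.
- apply/andP; split.
    by apply: divr_ge0; nra.
  by rewrite ler_pdivrMr; nra.
- rewrite !(dotpDl, dotpDr, dotpZl, dotpZr) u1 (dotpC u b) -/be.
  rewrite /D in sq2; nra.
- rewrite !(dotpDl, dotpDr, dotpZl, dotpZr) u1 (dotpC u b) -/be.
  rewrite /D in sq2; nra.
- apply/matrixP => i j; rewrite !mxE.
  have sqn : sq != 0 by rewrite gt_eqF.
  field; exact: sqn.
Qed.

End Helpers.

Theorem lemma1 (R : realType) (d : nat) (I : countType) (v : I -> 'rV[R]_d)
  (Hcap : cap_vertices v) (i : I) (u : 'rV[R]_d) (Hu : sphere u) :
  illuminates (cap_body v) (v i) u <->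
  dotp (v i) u < - Num.sqrt (enorm (v i) ^+ 2 - 1).
Proof.
have u1 : dotp u u = 1 by apply/sphereE.
set w := v i.
have vv1 : 1 < dotp w w.
  have := (Hcap.1 i); rewrite -/w => Hn.
  by rewrite ltNge; apply/negP => H; apply: Hn; apply/ball1E.
rewrite enorm_sq.
set s := Num.sqrt (dotp w w - 1).
have s0 : 0 <= s by exact: sqrtr_ge0.
have s2 : s ^+ 2 = dotp w w - 1 by rewrite sqr_sqrtr // subr_ge0 ltW.
set c := dotp w u.
split.
-
  move=> [lam lam0 [e e0 Hint]].
  rewrite ltNge; apply/negP => Hc.
  have [m [mm0 vm0 mmvm um0]] : exists m, [/\ 0 < dotp m m, 0 <= dotp w m,
        dotp m m <= dotp w m ^+ 2 & 0 <= dotp u m].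
    have [c0|c0] := leP 0 c.
      exists w; split; [lra | lra | nra | by rewrite dotpC].
    exists (w - c *: u).
    rewrite !(dotpBl, dotpBr, dotpZl, dotpZr) u1 (dotpC u w) -/c.
    have cs : c ^+ 2 <= dotp w w - 1 by rewrite -s2; nra.
    split; nra.
  have key : forall x, cap_body v x -> dotp x m <= dotp w m.
    move=> x; apply: conv_halfspace => y [Hy|[j ->]].
      move/sphereE: Hy => yy; have := CS y m; rewrite yy mul1r => H.
      rewrite leNgt; apply/negP => H2; nra.
    have [->|jne] := eqVneq j i; first exact: lexx.
    have [b [[t t01 ->] Hb]] := Hcap.2 i j (fun E => (negP jne) (introT eqP (esym E))).
    move/ball1E: Hb => bb.
    rewrite leNgt; apply/negP => H2.
    have [t0|tpos] := eqVneq t 0.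
      apply: (Hcap.1 i); apply/ball1E; move: bb.
      by rewrite t0 subr0 scale1r scale0r addr0.
    have tp : 0 < t by rewrite lt_neqAle eq_sym tpos; case/andP: t01.
    have H3 : dotp w m < (1 - t) * dotp w m + t * dotp (v j) m.
      case/andP: t01 => _ t1; nra.
    have H4 := dotp_ge0 m.
    have H6 : dotp ((1 - t) *: w + t *: v j) m ^+ 2 <= dotp m m.
      apply: le_trans (CS _ m) _; rewrite -[X in _ <= X]mul1r.
      by apply: ler_wpM2r.
    rewrite !(dotpDl, dotpZl) in H6.
    nra.
  set del := e / (1 + dotp m m).
  have del0 : 0 < del by apply: divr_gt0; lra.
  have delm : del * (1 + dotp m m) = e.
    rewrite /del mulfVK //; apply/negP => /eqP H0; have := dotp_ge0 m; lra.
  have := Hint (w + lam *: u + del *: m).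
  rewrite addrAC subrr add0r.
  move=> H; have /key : cap_body v (w + lam *: u + del *: m).
    apply: H; apply/enorm_lt => //.
    rewrite !(dotpZl, dotpZr).
    have : del * dotp m m < e by nra.
    nra.
  rewrite !(dotpDl, dotpZl) (dotpC u m) => H'.
  have : 0 < del * dotp m m by nra.
  rewrite (dotpC m u) in H'; nra.
-
  move=> Hc.
  have cneg : c < 0 by lra.
  have cs : s ^+ 2 < c ^+ 2 by nra.
  set q := w - c *: u.
  have qq : dotp q q = dotp w w - c ^+ 2.
    rewrite /q !(dotpBl, dotpBr, dotpZl, dotpZr) u1 (dotpC u w) -/c; ring.
  set a := dotp q q.
  have a1 : a < 1 by rewrite /a qq; lra.
  have a0 : 0 <= a by exact: dotp_ge0.
  exists (- c / 2); first lra.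
  exists ((1 - a) / 8); first lra.
  move=> y' /enorm_lt Hy.
  have Hyy := Hy ltac:(lra).
  set y := y' - (w + - c / 2 *: u) in Hyy.
  have yE : y = y' - (w + - c / 2 *: u) by [].
  have qE : q = w - c *: u by [].
  clearbody y q.
  set b := q + 2 *: y.
  have bb : dotp b b <= 1.
    rewrite /b !(dotpDl, dotpDr, dotpZl, dotpZr) -/a.
    have := CS q y; rewrite -/a => Hcs.
    have yy0 := dotp_ge0 y.
    have H1 : dotp q y ^+ 2 < ((1 - a) / 8) ^+ 2 by nra.
    have H2 : dotp q y < (1 - a) / 8 by nra.
    rewrite (dotpC y q); nra.
  have [a1' [a2' [t [t01 H1 H2 Hb]]]] := ball_conv u1 bb.
  pose wt := fun k : 'I_3 => nth 0 [:: 1/2; t/2; (1-t)/2] k.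
  pose pt := fun k : 'I_3 => nth 0 [:: w; a1'; a2'] k.
  exists 3, wt, pt; split; [|split; [|split]].
  + case/andP: t01 => t0 t1.
    move=> [k Hk]; case: k Hk => [|[|[|k]]] Hk //=; rewrite /wt /=; lra.
  + rewrite !big_ord_recl big_ord0 /wt /=; lra.
  + move=> [k Hk]; case: k Hk => [|[|[|k]]] Hk //=; rewrite /pt /=.
    * by right; exists i.
    * by left; apply/sphereE.
    * by left; apply/sphereE.
  + apply/matrixP => k l; rewrite summxE !big_ord_recl big_ord0 /wt /pt /=.
    have := congr1 (fun M : 'rV[R]_d => M k l) Hb.
    rewrite /b qE yE !mxE => E.
    rewrite ?mxE; lra.
Qed.
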